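(* Let $(N,C,\mathbf{A},k)$ be an instance with $|N|=n$ having at least one cohesive group, and let $c_{\max}$ be its maximum JR degree. If $n>k^2(c_{\max}-1)$, then the committee output by GreedyAV has JR degree $c_{\max}$.
   Context: An instance consists of voters $N=\{1,\dots,n\}$, candidates $C$, approval ballots $A_i\subseteq C$ for $i\in N$, and a committee size $k$ with $1\le k\le|C|$. $N'\subseteq N$ is a cohesive group if $|N'|\ge n/k$ and $|\bigcap_{i\in N'}A_i|\ge1$. A size-$k$ committee $W\subseteq C$ achieves JR degree $c$ if every cohesive group contains at least $c$ voters $i$ with $|A_i\cap W|\ge1$; its JR degree is the largest such $c$, and the maximum JR degree of the instance is the maximum over all size-$k$ committees. GreedyAV: start with $W=\emptyset$ and remaining voters $R=N$; repeat $k$ times: choose a candidate $c\notin W$ approved by the maximum number of voters in $R$ (ties arbitrary), add $c$ to $W$, and remove from $R$ all voters approving $c$; output $W$. *)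

(* Defs.v *)
From mathcomp Require Import all_boot.
Set Implicit Arguments.
Unset Strict Implicit.
Unset Printing Implicit Defensive.

Section JR.
Variables (n : nat) (C : finType) (A : 'I_n -> {set C}) (k : nat).

(* N' is cohesive: |N'| >= n/k (i.e. n <= |N'| * k) and the voters of N'
   have a common approved candidate. *)
Definition cohesive (S : {set 'I_n}) : Prop :=
  n <= #|S| * k /\ \bigcap_(i in S) A i != set0.

Definition achieves_jr (W : {set C}) (c : nat) : Prop :=
  forall S : {set 'I_n}, cohesive S ->
    c <= #|[set i in S | A i :&: W != set0]|.

Definition is_jr_degree (W : {set C}) (d : nat) : Prop :=
  achieves_jr W d /\ forall c, achieves_jr W c -> c <= d.

Definition is_max_jr_degree (cmax : nat) : Prop :=
  (exists W : {set C}, #|W| = k /\ is_jr_degree W cmax) /\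
  (forall (W : {set C}) d, #|W| = k -> is_jr_degree W d -> d <= cmax).

Definition remaining (W : {set C}) : {set 'I_n} :=
  [set i | [disjoint A i & W]].

Definition av_score (W : {set C}) (c : C) : nat :=
  #|[set i in remaining W | c \in A i]|.

(* A legal GreedyAV step from the current committee W (ties arbitrary). *)
Definition greedy_step (W : {set C}) (c : C) : bool :=
  (c \notin W) && [forall d, (d \notin W) ==> (av_score W d <= av_score W c)].

Inductive greedyAV_run : nat -> {set C} -> Prop :=
| greedy0 : greedyAV_run 0 set0
| greedyS j W c : greedyAV_run j W -> greedy_step W c ->
    greedyAV_run j.+1 (c |: W).

Definition greedyAV_output (W : {set C}) : Prop := greedyAV_run k W.

End JR.

(* Main.v *)
Require Import Defs.
From mathcomp Require Import all_boot.
From mathcomp Require Import zify.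

Section H.
Variables (n : nat) (C : finType) (A : 'I_n -> {set C}) (k : nat).

Lemma inrem W i : (i \in remaining A W) = (A i :&: W == set0).
Proof. by rewrite /remaining inE setI_eq0. Qed.

Lemma remU W c : remaining A (c |: W) = remaining A W :\: [set i | c \in A i].
Proof.
apply/setP => i; rewrite !inE /= -!setI_eq0 setIUr.
rewrite setU_eq0; congr (_ && _).
apply/idP/idP.
  by move/eqP=> H; apply/negP => cA; move/setP: H => /(_ c); rewrite !inE cA eqxx.
move=> cn; apply/eqP/setP => d; rewrite !inE.
by apply/negP => /andP[dA /eqP dc]; subst d; rewrite dA in cn.
Qed.

Lemma rem_card W c :
  #|remaining A W| = #|remaining A (c |: W)| + av_score A W c.
Proof.
rewrite remU /av_score addnC.
have -> : [set i in remaining A W | c \in A i] = remaining A W :&: [set i | c \in A i].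
  by apply/setP => i; rewrite !inE.
by rewrite cardsID.
Qed.

Definition cov (S : {set 'I_n}) W := [set i in S | A i :&: W != set0].

Lemma covE S W : cov S W = S :\: remaining A W.
Proof. by apply/setP => i; rewrite !inE -setI_eq0 andbC. Qed.

Lemma cov_split S W : #|S :&: remaining A W| + #|cov S W| = #|S|.
Proof. by rewrite covE cardsID. Qed.

Lemma cov_mono S W c : #|cov S W| <= #|cov S (c |: W)|.
Proof.
apply: subset_leq_card; rewrite !covE; apply: setDS.
by rewrite remU subsetDl.
Qed.

Lemma rem0 : remaining A set0 = setT.
Proof. by apply/setP => i; rewrite !inE -setI_eq0 setI0 eqxx. Qed.

Lemma cov0 S : #|cov S set0| = 0.
Proof. by rewrite covE rem0 setDT cards0. Qed.

Lemma invariant (S : {set 'I_n}) x : forall j W, greedyAV_run A j W -> x \notin W ->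
  (forall i, i \in S -> x \in A i) ->
  #|remaining A W| + j * #|S| + #|cov S W| <= n + j * #|cov S W|.
Proof.
move=> j0 W1 run0; elim: run0 => [|j W0 c run IH st] xW Sx.
  by rewrite rem0 cardsT card_ord cov0 !mul0n !addn0.
have xW0 : x \notin W0 by apply: contra xW => h; rewrite inE h orbT.
have {}IH := IH xW0 Sx.
move/andP: st => [cW /forallP /(_ x)]; rewrite xW0 /= => sc.
have hS : #|S :&: remaining A W0| <= av_score A W0 x.
  apply: subset_leq_card; apply/subsetP => i; rewrite !inE => /andP[iS ->].
  by rewrite Sx.
have spl := cov_split S W0.
have mono := cov_mono S W0 c.
have rc := rem_card W0 c.
have mm : j * #|cov S W0| <= j * #|cov S (c |: W0)| by rewrite leq_mul2l mono orbT.
rewrite !mulSn; move: IH sc hS spl mono rc mm; move: (j * _) (j * #|cov S W0|) (j * #|cov S (c |: W0)|) => js ja ja2; move: #|cov S W0| #|cov S (c |: W0)| #|S| => a a2 s; move: (av_score A W0 x) (av_score A W0 c) => sx sc2; move: #|remaining A W0| #|remaining A (c |: W0)| => r r2; move: #|S :&: _| => s1; lia.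
Qed.

Lemma run_card j W : greedyAV_run A j W -> #|W| = j.
Proof.
elim => [|j' W0 c _ IH /andP[cW _]]; first by rewrite cards0.
by rewrite cardsU1 cW IH.
Qed.

Definition achb W c := [forall S : {set 'I_n},
  ((n <= #|S| * k) && (\bigcap_(i in S) A i != set0)) ==> (c <= #|cov S W|)].

Lemma achP W c : reflect (achieves_jr A k W c) (achb W c).
Proof.
apply: (iffP forallP) => H S.
  by move=> [h1 h2]; apply: (implyP (H S)); rewrite h1 h2.
by apply/implyP => /andP[h1 h2]; apply: H.
Qed.

End H.

Theorem proposition4 (n : nat) (C : finType) (A : 'I_n -> {set C}) (k : nat)
    (cmax : nat) :
  1 <= k <= #|C| ->
  (exists S : {set 'I_n}, cohesive A k S) ->
  is_max_jr_degree A k cmax ->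
  (* n > k^2 (cmax - 1), written without truncated subtraction *)
  k ^ 2 * cmax < n + k ^ 2 ->
  forall W : {set C}, greedyAV_output A k W -> is_jr_degree A k W cmax.
Proof.
move=> /andP[k1 _] [S0 coh0] [[Wo [_ [achWo _]]] maxP] hn W run.
have achW : achieves_jr A k W cmax.
  move=> S [hS hx].
  have cS : cmax <= #|S|.
    apply: leq_trans (achWo S (conj hS hx)) _.
    by apply: subset_leq_card; apply/subsetP => i; rewrite inE => /andP[].
  case/set0Pn: hx => x /bigcapP Sx.
  case: (boolP (x \in W)) => xW.
    suff -> : [set i in S | A i :&: W != set0] = S by [].
    apply/setP => i; rewrite inE; case iS: (i \in S) => //=.
    by apply/set0Pn; exists x; rewrite inE Sx.
  rewrite leqNgt; apply/negP => lt.
  have inv := @invariant n C A S x k W run xW Sx.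
  have spl := @cov_split n C A S W.
  have sub : #|S :&: remaining A W| <= #|remaining A W|
    by apply: subset_leq_card; apply: subsetIr.
  have lt' : #|cov n C A S W| < cmax := lt.
  move: inv spl sub lt' hS hn; move: #|cov n C A S W| #|S| #|remaining A W| #|S :&: _| => a s r s1 inv spl sub lt' hS hn.
  have h1 : (k.+1) * s <= n + k * a by rewrite mulSn; lia.
  have h2 : k * (k.+1 * s) <= k * (n + k * a) by rewrite leq_mul2l h1 orbT.
  have h3 : k * a < k * cmax by rewrite ltn_mul2l k1 lt'.
  have h4 : k * (k * a) < k * (k * cmax) by rewrite ltn_mul2l k1 h3.
  nia.
split => // c achc.
have bd : forall c', achb n C A k W c' -> c' <= n.
  move=> c' /achP /(_ S0 coh0) h; apply: leq_trans h _.
  by apply: leq_trans (max_card _) _; rewrite card_ord.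
have ex : exists c', achb n C A k W c' by exists c; apply/achP.
case: (ex_maxnP ex bd) => d /achP achd dmax.
have : d <= cmax.
  apply: (maxP W d (@run_card n C A k W run)); split => // c' /achP h; exact: dmax.
by apply: leq_trans; apply: dmax; apply/achP.
Qed.
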